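(* Let $\beta=(\pi_\ell)_{\ell=1}^L$ be a chainable architecture. Then for all $1\le q\le s<t\le L$, the patterns $\pi_q*\cdots*\pi_s$ and $\pi_{s+1}*\cdots*\pi_t$ are well defined, the pair $(\pi_q*\cdots*\pi_s,\ \pi_{s+1}*\cdots*\pi_t)$ is chainable, and $$r(\pi_q*\cdots*\pi_s,\ \pi_{s+1}*\cdots*\pi_t)=r(\pi_s,\pi_{s+1}).$$
   Context: A pattern is a tuple $\pi=(a,b,c,d)$ of positive integers. Patterns $\pi=(a,b,c,d),\pi'=(a',b',c',d')$ are chainable if $ac/a'=b'd'/d$, this common value $r(\pi,\pi')$ is an integer, $a\mid a'$ and $d'\mid d$; then $\pi*\pi':=(a,bd/d',a'c'/a,d')$. An architecture $\beta=(\pi_\ell)_{\ell=1}^L$, $\pi_\ell=(a_\ell,b_\ell,c_\ell,d_\ell)$, is a sequence of patterns with $a_\ell c_\ell d_\ell=a_{\ell+1}b_{\ell+1}d_{\ell+1}$; it is chainable if every consecutive pair $(\pi_\ell,\pi_{\ell+1})$ is chainable. $\pi_q*\cdots*\pi_s$ denotes the iterated product $((\pi_q*\pi_{q+1})*\cdots)*\pi_s$ (equal to $\pi_q$ if $q=s$). *)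

(* Defs.v *)
From mathcomp Require Import all_boot.
Set Implicit Arguments. Unset Strict Implicit. Unset Printing Implicit Defensive.

Record pattern := Pattern { pa : nat; pb : nat; pc : nat; pd : nat }.

Definition pattern_pos (p : pattern) : Prop :=
  0 < pa p /\ 0 < pb p /\ 0 < pc p /\ 0 < pd p.

(* Chainability of (p, p').  For positive entries, the rational equation
   a c / a' = b' d' / d is equivalent to a c d = a' b' d'; the common value
   being an integer means a' divides a c. *)
Definition chainable (p p' : pattern) : Prop :=
  pa p * pc p * pd p = pa p' * pb p' * pd p' /\
  pa p' %| pa p * pc p /\
  pa p %| pa p' /\
  pd p' %| pd p.

(* the common value r(p, p') = a c / a' (an exact division when chainable) *)
Definition rval (p p' : pattern) : nat := (pa p * pc p) %/ pa p'.

Definition pstar (p p' : pattern) : pattern :=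
  Pattern (pa p) (pb p * pd p %/ pd p') (pa p' * pc p' %/ pa p) (pd p').

Definition pstar_opt (p p' : pattern) : option pattern :=
  if (pa p * pc p * pd p == pa p' * pb p' * pd p')
     && (pa p' %| pa p * pc p) && (pa p %| pa p') && (pd p' %| pd p)
  then Some (pstar p p') else None.

(* iter_prod beta q n = pi_q * pi_{q+1} * ... * pi_{q+n}, left-associated,
   or None if some intermediate pair is not chainable (ill-defined). *)
Fixpoint iter_prod (beta : nat -> pattern) (q n : nat) : option pattern :=
  match n with
  | 0 => Some (beta q)
  | n'.+1 => match iter_prod beta q n' with
             | Some P => pstar_opt P (beta (q + n))
             | None => None
             end
  end.

Definition iprod (beta : nat -> pattern) (q s : nat) : option pattern :=
  iter_prod beta q (s - q).

Definition architecture (beta : nat -> pattern) (L : nat) : Prop :=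
  (forall l, 1 <= l <= L -> pattern_pos (beta l)) /\
  (forall l, 1 <= l < L ->
     pa (beta l) * pc (beta l) * pd (beta l)
     = pa (beta l.+1) * pb (beta l.+1) * pd (beta l.+1)).

Definition chainable_architecture (beta : nat -> pattern) (L : nat) : Prop :=
  architecture beta L /\ (forall l, 1 <= l < L -> chainable (beta l) (beta l.+1)).

(* Main.v *)
Require Import Defs.
From mathcomp Require Import all_boot.
From mathcomp Require Import zify.

Lemma chain_dvd (beta : nat -> pattern) (L : nat) :
  chainable_architecture beta L ->
  forall q n, 1 <= q -> q + n <= L ->
  pa (beta q) %| pa (beta (q + n)) /\ pd (beta (q + n)) %| pd (beta q).
Proof.
move=> [_ Hc] q n Hq; elim: n => [|n IH] Hn; first by rewrite addn0.
have Hn' : q + n <= L by apply: ltnW; rewrite -addnS.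
have [ha hd] := IH Hn'.
have : 1 <= q + n < L by rewrite (leq_trans Hq (leq_addr _ _)) -addnS.
move/Hc => [_ [_ [h1 h2]]].
rewrite addnS; split; first exact: dvdn_trans ha h1.
exact: dvdn_trans h2 hd.
Qed.

Arguments chain_dvd {beta L} _ {q n}.

Lemma iter_inv (beta : nat -> pattern) (L : nat) :
  chainable_architecture beta L ->
  forall q n, 1 <= q -> q + n <= L ->
  exists P, iter_prod beta q n = Some P /\
    pa P = pa (beta q) /\ pd P = pd (beta (q + n)) /\
    pa P * pc P = pa (beta (q + n)) * pc (beta (q + n)) /\
    pb P * pd P = pb (beta q) * pd (beta q).
Proof.
move=> HA q n Hq; elim: n => [|n IH] Hn.
  by exists (beta q); rewrite addn0.
have Hn' : q + n <= L by apply: ltnW; rewrite -addnS.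
have [P [EP [Pa [Pd [Pac Pbd]]]]] := IH Hn'.
have [[Hpos _] Hc] := HA.
have : 1 <= q + n < L by rewrite (leq_trans Hq (leq_addr _ _)) -addnS.
move/Hc => [e1 [e2 [e3 e4]]].
have [ha hd] := chain_dvd HA Hq Hn.
have [ha' hd'] := chain_dvd HA Hq Hn'.
rewrite addnS in ha hd *.
exists (pstar P (beta (q + n).+1)); split.
  rewrite /= EP /pstar_opt Pd Pac e1.
  by rewrite addnS eqxx e2 e4 Pa (dvdn_trans ha' e3).
have hq0 : 0 < pa (beta q) by case: (Hpos q); [rewrite Hq /=; apply: leq_trans Hn; apply: leq_addr|].
have hd0 : 0 < pd (beta (q + n).+1).
  by case: (Hpos (q + n).+1) => [|_ [_ [_ ->]]] //; rewrite -addnS Hn andbT (leq_trans Hq (leq_addr _ _)).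
rewrite /pstar /=; split; first by [].
split; first by [].
split.
  rewrite mulnC divnK; first by [].
  rewrite Pa; exact: dvdn_mulr.
rewrite Pbd divnK; first by [].
apply: (dvdn_trans hd); exact: dvdn_mull.
Qed.

Arguments iter_inv {beta L} _ {q n}.

Theorem lemma4p10 (beta : nat -> pattern) (L : nat) :
  chainable_architecture beta L ->
  forall q s t : nat, 1 <= q -> q <= s -> s < t -> t <= L ->
  exists P1 P2 : pattern,
    iprod beta q s = Some P1 /\ iprod beta s.+1 t = Some P2 /\
    chainable P1 P2 /\ rval P1 P2 = rval (beta s) (beta s.+1).
Proof.
move=> HA q s t Hq Hqs Hst HtL.
have Hs1 : q + (s - q) <= L by lia.
have Hs2 : q + (s.+1 - q) <= L by lia.
have E5 : q + (s.+1 - q) = s.+1 by lia.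
have H1 : 1 <= s < L by lia.
have H2 : 0 < t <= L by lia.
have Ht1 : s.+1 + (t - s.+1) <= L by lia.
have [P1 [E1 [P1a [P1d [P1ac P1bd]]]]] := iter_inv HA Hq Hs1.
have [P2 [E2 [P2a [P2d [P2ac P2bd]]]]] := iter_inv HA (isT : 0 < s.+1) Ht1.
have E3 : q + (s - q) = s by lia.
have E4 : s.+1 + (t - s.+1) = t by lia.
rewrite E3 in P1d P1ac; rewrite E4 in P2d P2ac.
exists P1, P2; split; first exact: E1.
split; first exact: E2.
have [[Hpos _] Hc] := HA.
have : 1 <= s < L by [].
move/Hc => [e1 [e2 [e3 e4]]].
have [ha _] := chain_dvd HA Hq Hs2.
rewrite E5 in ha.
have [_ hd] := chain_dvd HA (isT : 0 < s.+1) Ht1.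
rewrite E4 in hd.
have hd0 : 0 < pd (beta t).
  have : 0 < t <= L by [].
  by move/Hpos => [_ [_ [_ ->]]].
have Eb : pb P2 = pb (beta s.+1) * pd (beta s.+1) %/ pd (beta t).
  by rewrite -P2bd P2d mulnK.
split; last by rewrite /rval P1ac P2a.
rewrite /chainable P1ac P1a P1d P2a P2d; split.
  rewrite e1 -!mulnA; congr (_ * _).
  rewrite Eb divnK; first by [].
  apply: (dvdn_trans hd); exact: dvdn_mull.
split; first by [].
split; first by [].
exact: dvdn_trans hd e4.
Qed.
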